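(* Let $p\geq 3$ be a prime, $u\in\{2,\ldots,p-1\}$ and $s$ a positive integer. Then $$\nu_{p}\big(A_{p,(p-1)(up^s-1)}(n)\big)\geq 2$$ for infinitely many $n\in\mathbb{N}$.
   Context: For an integer $m\geq 2$ and a positive integer $k$, the integers $A_{m,k}(n)$, $n\in\mathbb{N}=\{0,1,2,\ldots\}$, are defined by the formal power series identity $\prod_{i=0}^{\infty}\big(1-x^{m^{i}}\big)^{-k}=\sum_{n=0}^{\infty}A_{m,k}(n)x^{n}$. For a prime $p$, $\nu_p(n)$ denotes the $p$-adic valuation of the integer $n$, with $\nu_p(0)=+\infty$. *)

(* Defs.v *)
From mathcomp Require Import all_boot all_order all_algebra.
Set Implicit Arguments. Unset Strict Implicit. Unset Printing Implicit Defensive.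
Import GRing.Theory.
Local Open Scope ring_scope.

(* Truncation (degrees <= N) of the formal geometric series
   (1 - x^(m^i))^(-1) = \sum_{j >= 0} x^(j m^i). *)
Definition geom_trunc (m i N : nat) : {poly int} :=
  \sum_(j < N.+1) 'X^(j * m ^ i).

(* A_{m,k}(n) = [x^n] \prod_{i >= 0} (1 - x^(m^i))^(-k).
   Only factors with m^i <= n and terms of degree <= n contribute to the
   coefficient of x^n (for m >= 2 every i with m^i <= n satisfies i <= n),
   so the truncated finite product computes the coefficient exactly. *)
Definition A (m k n : nat) : int :=
  (\prod_(i < n.+1) (geom_trunc m i n) ^+ k)`_n.

(* Main.v *)
Require Import Defs.
From mathcomp Require Import all_boot all_order all_algebra.
From mathcomp Require Import zify ring lra.
Set Implicit Arguments. Unset Strict Implicit. Unset Printing Implicit Defensive.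
Import GRing.Theory.
Local Open Scope ring_scope.

Definition inI (a b y : {poly int}) := exists h k, y = a * h + b * k.
Definition eqm a b (f g : {poly int}) := inI a b (f - g).

Section Ideal.
Variables a b : {poly int}.
Lemma inI0 : inI a b 0. Proof. by exists 0, 0; rewrite !mulr0 addr0. Qed.
Lemma inID y z : inI a b y -> inI a b z -> inI a b (y + z).
Proof. by move=> [h [k ->]] [h' [k' ->]]; exists (h + h'), (k + k'); ring. Qed.
Lemma inIN y : inI a b y -> inI a b (- y).
Proof. by move=> [h [k ->]]; exists (- h), (- k); ring. Qed.
Lemma inIMl z y : inI a b y -> inI a b (z * y).
Proof. by move=> [h [k ->]]; exists (z * h), (z * k); ring. Qed.
Lemma inIa h : inI a b (a * h). Proof. by exists h, 0; ring. Qed.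
Lemma inIb k : inI a b (b * k). Proof. by exists 0, k; ring. Qed.

Lemma eqm_refl f : eqm a b f f. Proof. by rewrite /eqm subrr; apply: inI0. Qed.
Lemma eqm_sym f g : eqm a b f g -> eqm a b g f.
Proof. by rewrite /eqm => /inIN; rewrite opprB. Qed.
Lemma eqm_trans f g h : eqm a b f g -> eqm a b g h -> eqm a b f h.
Proof. by rewrite /eqm => H1 H2; have := inID H1 H2; rewrite addrA subrK. Qed.
Lemma eqmD f g f' g' : eqm a b f g -> eqm a b f' g' -> eqm a b (f + f') (g + g').
Proof. by rewrite /eqm => H1 H2; have := inID H1 H2; congr inI; ring. Qed.
Lemma eqmM f g f' g' : eqm a b f g -> eqm a b f' g' -> eqm a b (f * f') (g * g').
Proof.
rewrite /eqm => H1 H2.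
have := inID (inIMl f' H1) (inIMl g H2); congr inI; ring.
Qed.
Lemma eqmX f g n : eqm a b f g -> eqm a b (f ^+ n) (g ^+ n).
Proof.
move=> H; elim: n => [|n IH]; first exact: eqm_refl.
by rewrite !exprS; apply: eqmM.
Qed.
Lemma eqm_prod n (F G : 'I_n -> {poly int}) :
  (forall i, eqm a b (F i) (G i)) -> eqm a b (\prod_i F i) (\prod_i G i).
Proof.
move=> H; elim/big_ind2: _ => //; first exact: eqm_refl.
by move=> *; apply: eqmM.
Qed.
Lemma eqm_in f g : inI a b (f - g) -> eqm a b f g. Proof. by []. Qed.
End Ideal.

Lemma inI_mul e c c' y z : inI ('X^e) (c%:P) y -> inI ('X^e) (c'%:P) z ->
  inI ('X^e) ((c * c')%:P) (y * z).
Proof.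
move=> [h [k ->]] [h' [k' ->]].
exists (h * ('X^e * h' + c'%:P * k') + c%:P * k * h'), (k * k').
rewrite polyCM; ring.
Qed.

Lemma eqm_frob e (p : nat) f g : (0 < p)%N -> eqm ('X^e) (p%:R%:P) f g ->
  eqm ('X^e) ((p ^ 2)%:R%:P) (f ^+ p) (g ^+ p).
Proof.
move=> p0 H; rewrite /eqm subrXX.
have -> : ((p ^ 2)%:R : int) = p%:R * p%:R by rewrite natrX expr2.
apply: inI_mul => //.
have HS : eqm ('X^e) (p%:R%:P)
   (\sum_(i < p) f ^+ (p.-1 - i) * g ^+ i) (\sum_(i < p) g ^+ (p.-1 - i) * g ^+ i).
  elim/big_ind2: _ => //; first exact: eqm_refl.
    by move=> *; apply: eqmD.
  by move=> i _; apply: eqmM; [apply: eqmX|apply: eqm_refl].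
have := HS; rewrite /eqm => HS'.
have := inID HS' (inIb ('X^e) (p%:R%:P) (g ^+ p.-1)).
congr inI.
have -> : \sum_(i < p) g ^+ (p.-1 - i) * g ^+ i = (p%:R)%:P * g ^+ p.-1.
  rewrite (eq_bigr (fun _ => g ^+ p.-1)); last first.
    by move=> i _; rewrite -exprD subnK // -ltnS prednK.
  by rewrite sumr_const card_ord polyCMn polyC1 mulrnAl mul1r.
by rewrite subrK.
Qed.

Definition Qp (p L : nat) : {poly int} := \prod_(i < L) (1 - 'X^(p ^ i)).

Lemma Qsplit p a b : Qp p (a + b) = Qp p a * (Qp p b \Po 'X^(p ^ a)).
Proof.
rewrite /Qp big_split_ord /=; congr (_ * _).
rewrite (rmorph_prod (comp_poly _)); apply: eq_bigr => i _.
by rewrite rmorphB rmorph1 /= comp_Xn_poly -exprM -expnD.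
Qed.

Lemma L1 (f g : {poly int}) d a r : (size f <= d)%N -> (r < d)%N ->
  (f * (g \Po 'X^d))`_(a * d + r) = f`_r * g`_a.
Proof.
move=> sf rd; have d0 : (0 < d)%N by apply: leq_ltn_trans rd.
have rm : (r < (a * d + r).+1)%N by lia.
rewrite coefM (bigD1 (Ordinal rm)) //= big1 ?addr0.
  by rewrite coef_comp_poly_Xn // addnK dvdn_mull // mulnK.
move=> j /eqP neq.
have {}neq : (j : nat) <> r by move=> E; apply: neq; apply: val_inj.
case: (ltnP j d) => jd; last by rewrite nth_default ?mul0r // (leq_trans sf jd).
rewrite coef_comp_poly_Xn //.
have jm : (j <= a * d + r)%N by have := ltn_ord j; lia.
case: ifP => [/dvdnP [k Hk]|]; last by rewrite mulr0.
exfalso.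
case: (leqP j r) => jr.
  have : (d %| r - j)%N.
    by rewrite -(dvdn_addl _ (dvdn_mull a (dvdnn d))); apply/dvdnP; exists k; lia.
  by rewrite gtnNdvd //; lia.
have : (d %| j - r)%N.
  rewrite -(dvdn_addr _ (dvdn_mull k (dvdnn d))); apply/dvdnP; exists a; lia.
by rewrite gtnNdvd //; lia.
Qed.

Lemma coef1X n j : ((1 - 'X)^+n : {poly int})`_j = (-1)^+j * ('C(n,j))%:R.
Proof.
elim: n j => [|n IH] j.
  by rewrite expr0 coef1 bin0n; case: j => [|j] //=; rewrite mulr0.
rewrite exprS mulrBl mul1r coefB coefXM; case: j => [|j] /=.
  by rewrite IH subr0 !bin0 !expr0.
rewrite !IH binS natrD exprS; ring.
Qed.

Lemma size1X n : (size ((1 - 'X)^+n : {poly int}) <= n.+1)%N.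
Proof.
apply: leq_trans (size_exp_leq _ _) _.
have -> : size (1 - 'X : {poly int}) = 2%N.
  by rewrite -opprB size_opp -polyC1 size_XsubC.
by rewrite mul1n.
Qed.

Definition W (p L : nat) : {poly int} := Qp p L ^+ p.-1.

Lemma Wsplit p a b : W p (a + b) = W p a * (W p b \Po 'X^(p ^ a)).
Proof. by rewrite /W Qsplit exprMn rmorphXn. Qed.

Lemma Wsplit1 p L : W p L.+1 = (1 - 'X)^+p.-1 * (W p L \Po 'X^p).
Proof.
have -> : L.+1 = (1 + L)%N by [].
rewrite Wsplit expn1; congr (_ * _).
by rewrite /W /Qp big_ord1 expn0 expr1.
Qed.

Lemma Wpeel p L a r : (0 < p)%N -> (r < p)%N ->
  (W p L.+1)`_(a * p + r) = ((1 - 'X)^+p.-1 : {poly int})`_r * (W p L)`_a.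
Proof.
move=> p0 rp; rewrite Wsplit1 L1 //.
by apply: leq_trans (size1X _) _; rewrite prednK.
Qed.

Lemma W0 p : W p 0 = 1.
Proof. by rewrite /W /Qp big_ord0 expr1n. Qed.

Lemma Wcoef0 p L : (0 < p)%N -> (W p L)`_0 = 1.
Proof.
move=> p0; elim: L => [|L IH]; first by rewrite W0 coef1.
by have := @Wpeel p L 0 0 p0 p0; rewrite mul0n addn0 => ->; rewrite IH mulr1 coef1X expr0 bin0 mul1r.
Qed.

Lemma Wsize p L : (0 < p)%N -> (size (W p L) <= p ^ L)%N.
Proof.
move=> p0; elim: L => [|L IH]; first by rewrite W0 size_poly1.
rewrite Wsplit1; apply: leq_trans (size_mul_leq _ _) _.
have h1 := size1X p.-1; rewrite prednK // in h1.
have h2 := size_comp_poly_leq (W p L) 'X^p.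
rewrite size_polyXn /= in h2.
have h3 : (0 < p ^ L)%N by rewrite expn_gt0 p0.
rewrite expnS.
have h4 : ((size (W p L)).-1 * p <= (p ^ L).-1 * p)%N.
  by apply: leq_mul => //; rewrite -!subn1 leq_sub2r.
have h5 : ((p ^ L).-1 * p + p = p ^ L * p)%N.
  by move: h3; case: (p ^ L)%N => // k _ /=; rewrite mulSn addnC.
rewrite [(p * _)%N]mulnC.
apply: (@leq_trans (p + ((size (W p L)).-1 * p).+1).-1).
  have h6 := leq_add h1 h2; move: h6.
  by case: (size _ + size _)%N => [|m]; case: (p + _)%N.
rewrite addnS /= -h5 addnC leq_add2r //.
Qed.

Lemma L2 (K g : {poly int}) d a r : (size K <= d + d)%N -> (r < d)%N -> (0 < a)%N ->
  (K * (g \Po 'X^d))`_(a * d + r) = K`_r * g`_a + K`_(d + r) * g`_(a.-1).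
Proof.
move=> sK rd a0.
rewrite -{1}(poly_take_drop d K) mulrDl coefD L1 ?size_take_poly //.
rewrite coef_take_poly rd; congr (_ + _).
rewrite -mulrA.
have -> : 'X^d * (g \Po 'X^d) = ('X * g) \Po 'X^d by rewrite comp_polyM comp_polyX.
rewrite L1 //; last by rewrite size_drop_poly; lia.
by rewrite coef_drop_poly coefXM gtn_eqF // addnC.
Qed.

Lemma b_mod p r : prime p -> (r < p)%N ->
  (p%:Z %| (-1)^+r * ('C(p.-1, r))%:R - 1)%Z.
Proof.
move=> pp; elim: r => [|r IH] rp; first by rewrite expr0 bin0 mul1r subrr dvdz0.
have p0 : (0 < p)%N := prime_gt0 pp.
have H : ('C(p, r.+1) = 'C(p.-1, r.+1) + 'C(p.-1, r))%N.
  by rewrite -{1}(prednK p0) binS.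
have Hd : (p%:Z %| ('C(p, r.+1))%:R)%Z.
  by rewrite dvdzE /= natz absz_nat prime_dvd_bin //; apply/andP; split.
have -> : (-1) ^+ r.+1 * ('C(p.-1, r.+1))%:R - 1 =
   (-1) ^+ r.+1 * ('C(p, r.+1))%:R + ((-1) ^+ r * ('C(p.-1, r))%:R - 1) :> int.
  by rewrite H natrD exprS; ring.
by rewrite rpredD ?IH ?(ltnW rp) // dvdz_mull.
Qed.

Lemma W_mod p L m : prime p -> (m < p ^ L)%N -> (p%:Z %| (W p L)`_m - 1)%Z.
Proof.
move=> pp; have p0 : (0 < p)%N := prime_gt0 pp.
elim: L m => [|L IH] m.
  by rewrite expn0 ltnS leqn0 => /eqP ->; rewrite W0 coef1 subrr dvdz0.
move=> mL; rewrite (divn_eq m p) Wpeel ?ltn_pmod // coef1X.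
have h1 := @b_mod p (m %% p)%N pp (ltn_pmod m p0).
have h2 : (p%:Z %| (W p L)`_(m %/ p) - 1)%Z.
  by apply: IH; rewrite ltn_divLR // -expnSr.
set b := _ * _ in h1 *; set w := _`_ _ in h2 *.
have -> : b * w - 1 = b * (w - 1) + (b - 1) by ring.
by rewrite rpredD // dvdz_mull.
Qed.

Lemma eqm_eq a b f g : f = g -> eqm a b f g.
Proof. by move=> ->; apply: eqm_refl. Qed.

Lemma inI_pp e (c : int) y : inI (c%:P) (c%:P) y -> inI ('X^e) (c%:P) y.
Proof. by move=> [h [k ->]]; exists 0, (h + k); ring. Qed.

Lemma eqm_pp e (c : int) f g : eqm (c%:P) (c%:P) f g -> eqm ('X^e) (c%:P) f g.
Proof. exact: inI_pp. Qed.

Lemma inI_X e (c : int) m y : (e <= m)%N -> inI ('X^e) (c%:P) ('X^m * y).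
Proof.
move=> em; exists ('X^(m - e) * y), 0.
by rewrite mulr0 addr0 mulrA -exprD subnKC.
Qed.

Lemma geom_inv p i n (c : int) : (0 < p)%N ->
  eqm ('X^(n.+1)) (c%:P) ((1 - 'X^(p ^ i)) * geom_trunc p i n) 1.
Proof.
move=> p0; rewrite /geom_trunc.
have -> : \sum_(j < n.+1) 'X^(j * p ^ i) = \sum_(j < n.+1) ('X^(p ^ i))^+j :> {poly int}.
  by apply: eq_bigr => j _; rewrite -exprM mulnC.
have -> : (1 - 'X^(p ^ i)) * \sum_(j < n.+1) ('X^(p ^ i))^+j =
   - (('X^(p ^ i) : {poly int})^+n.+1 - 1) by rewrite subrX1; ring.
rewrite /eqm.
have -> : - (('X^(p ^ i) : {poly int}) ^+ n.+1 - 1) - 1 = 'X^(p ^ i * n.+1) * (-1).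
  by rewrite exprM; ring.
by apply: inI_X; rewrite leq_pmull // expn_gt0 p0.
Qed.

Lemma inI_natmul (c : nat) (x : {poly int}) m : (c %| m)%N ->
  inI (c%:R%:P) (c%:R%:P) (x *+ m).
Proof.
move=> /dvdnP [k ->]; exists 0, (x *+ k).
by rewrite mulr0 add0r polyCMn polyC1 mulrnAl mul1r -mulrnA mulnC.
Qed.

Lemma frob1 p (Y : {poly int}) : prime p -> odd p ->
  eqm (p%:R%:P) (p%:R%:P) ((1 - Y) ^+ p) (1 - Y ^+ p).
Proof.
move=> pp op; have p0 := prime_gt0 pp.
rewrite /eqm [1 - Y]addrC exprD1n (bigD1 ord0) //= (bigD1 ord_max) //=.
rewrite expr0 bin0 mulr1n binn mulr1n exprNn -signr_odd op expr1 mulN1r.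
set S := \sum_(i | _) _.
have -> : 1 + (- Y ^+ p + S) - (1 - Y ^+ p) = S by ring.
apply: (big_ind (inI _ _)); first exact: inI0.
  by move=> x y; apply: inID.
move=> i /andP [H0 Hm]; apply: inI_natmul; apply: prime_dvd_bin => //.
apply/andP; split; first by rewrite lt0n.
have := ltn_ord i; rewrite ltnS leq_eqVlt => /orP [/eqP E|] //.
by exfalso; move/eqP: Hm; apply; apply: val_inj.
by rewrite -(inj_eq val_inj) /= -lt0n.
Qed.

Lemma frobs p s : prime p -> odd p ->
  eqm (p%:R%:P) (p%:R%:P) ((1 - 'X) ^+ (p ^ s)) (1 - 'X^(p ^ s) : {poly int}).
Proof.
move=> pp op; elim: s => [|s IH]; first by rewrite expn0 expr1; apply: eqm_refl.
rewrite expnSr exprM; apply: eqm_trans (eqmX p IH) _.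
by rewrite exprM; apply: frob1.
Qed.

Lemma coef_eqm n (c : int) f g : eqm ('X^(n.+1)) (c%:P) f g -> (c %| f`_n - g`_n)%Z.
Proof.
move=> [h [k E]]; rewrite -coefB E coefD coefXnM ltnSn add0r coefCM.
exact: dvdz_mulr.
Qed.

Lemma Qp1 p : Qp p 1 = 1 - 'X.
Proof. by rewrite /Qp big_ord1 expn0 expr1. Qed.

Lemma main_cong p u s n : prime p -> odd p -> (0 < u)%N -> (0 < s)%N ->
  (((p ^ 2)%N)%:R %| A p ((p - 1) * (u * p ^ s - 1)) n
      - (W p n.+1 * (1 - 'X)^+(u * p ^ s))`_n)%Z.
Proof.
move=> pp op u0 s0; have p0 := prime_gt0 pp; have p1 := prime_gt1 pp.
set k := ((p - 1) * (u * p ^ s - 1))%N.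
set P := \prod_(i < n.+1) geom_trunc p i n.
have -> : A p k n = (P ^+ k)`_n by rewrite /A prodrXl.
set Q := Qp p n.+1.
set Xe := ('X^(n.+1) : {poly int}).
set pP := ((p%:R : int)%:P).
have hQP : forall c : int, eqm Xe c%:P (Q * P) 1.
  move=> c; rewrite /Q /Qp /P -big_split /=.
  apply: (@eqm_trans _ _ _ (\prod_(i < n.+1) (1 : {poly int}))).
    by apply: eqm_prod => i; apply: geom_inv.
  by rewrite big1_eq; apply: eqm_refl.
have hQs : eqm Xe pP (Q ^+ p) (Q \Po 'X^p).
  apply: eqm_pp; rewrite /Q /Qp -prodrXl (rmorph_prod (comp_poly _)).
  apply: eqm_prod => i /=.
  move: (frob1 ('X^(p ^ i)) pp op) => H; apply: eqm_trans H _; apply: eqm_eq.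
  by rewrite rmorphB rmorph1 /= comp_Xn_poly -!exprM mulnC.
have hid : (1 - 'X) * (Q \Po 'X^p) = Q * (1 - 'X^(p ^ n.+1)).
  have e1 := Qsplit p 1 n.+1; have e2 := Qsplit p n.+1 1.
  have e3 : (n.+1 + 1 = 1 + n.+1)%N by rewrite addnC.
  rewrite e3 e1 Qp1 expn1 in e2.
  by rewrite rmorphB rmorph1 /= comp_polyX in e2.
have hQs2 : forall c : int, eqm Xe c%:P ((1 - 'X) * (Q \Po 'X^p)) Q.
  move=> c; rewrite hid /eqm.
  have -> : Q * (1 - 'X^(p ^ n.+1)) - Q = 'X^(p ^ n.+1) * (- Q) by ring.
  by apply: inI_X; apply: ltn_trans (ltnSn n) (ltn_expl _ p1).
have h4 : eqm Xe pP (P ^+ p) ((1 - 'X) * P).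
  apply: eqm_sym.
  have H1 := eqmM (eqm_refl Xe pP ((1 - 'X) * P)) (eqm_sym (eqmX p (hQP (p%:R)))).
  rewrite expr1n mulr1 in H1; apply: eqm_trans H1 _.
  rewrite exprMn.
  apply: (@eqm_trans _ _ _ (((1 - 'X) * Q ^+ p) * (P * P ^+ p))).
    by apply: eqm_eq; ring.
  have H2 := eqmM (eqmM (eqm_refl Xe pP (1 - 'X)) hQs) (eqm_refl Xe pP (P * P ^+ p)).
  apply: eqm_trans H2 _.
  have H3 := eqmM (hQs2 (p%:R)) (eqm_refl Xe pP (P * P ^+ p)).
  apply: eqm_trans H3 _.
  have H4 := eqmM (hQP (p%:R)) (eqm_refl Xe pP (P ^+ p)).
  rewrite mul1r in H4; apply: eqm_trans _ H4.
  by apply: eqm_eq; ring.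
have h5 : eqm Xe pP (P ^+ p.-1) (1 - 'X).
  have H1 := eqmM (eqm_refl Xe pP (P ^+ p.-1)) (eqm_sym (hQP (p%:R))).
  rewrite mulr1 in H1; apply: eqm_trans H1 _.
  have eP : P ^+ p.-1 * (Q * P) = Q * P ^+ p by rewrite mulrCA -exprSr prednK.
  rewrite eP.
  have H2 := eqmM (eqm_refl Xe pP Q) h4.
  apply: eqm_trans H2 _.
  have H3 := eqmM (eqm_refl Xe pP (1 - 'X)) (hQP (p%:R)).
  rewrite mulr1 in H3; apply: eqm_trans _ H3.
  by apply: eqm_eq; ring.
have h6 := eqm_frob p0 h5.
have es : (p * p ^ s.-1 = p ^ s)%N by rewrite -expnS prednK.
have h7 := eqmX (p ^ s.-1 * u) h6.
have es2 : (p * (p ^ s.-1 * u) = p ^ s * u)%N by rewrite mulnA es.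
rewrite -!exprM es2 in h7.
have ek : (k + p.-1 = p.-1 * (p ^ s * u))%N.
  rewrite /k subn1 -mulnSr [(p ^ s * u)%N]mulnC subn1 prednK //.
  by rewrite muln_gt0 u0 expn_gt0 p0.
set p2P := ((p ^ 2)%:R : int)%:P in h7.
have h8 : eqm Xe p2P (P ^+ k) (W p n.+1 * (1 - 'X) ^+ (u * p ^ s)).
  have H1 := eqmM (eqm_refl Xe p2P (P ^+ k)) (eqm_sym (eqmX p.-1 (hQP ((p ^ 2)%:R)))).
  rewrite expr1n mulr1 in H1; apply: eqm_trans H1 _.
  have eP : P ^+ k * (Q * P) ^+ p.-1 = W p n.+1 * P ^+ (p.-1 * (p ^ s * u)).
    by rewrite -ek exprMn exprD /W; ring.
  rewrite eP [(u * _)%N]mulnC.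
  by apply: eqmM => //; apply: eqm_refl.
by have := coef_eqm h8.
Qed.

Lemma Rdecomp p u s : prime p -> odd p -> exists R1 : {poly int},
  (1 - 'X)^+(u * p ^ s) = ((1 - 'X)^+u \Po 'X^(p ^ s)) + (p%:R)%:P * R1.
Proof.
move=> pp op.
have H := eqmX u (frobs s pp op).
rewrite -exprM mulnC in H.
have -> : ((1 - 'X)^+u \Po 'X^(p ^ s)) = (1 - 'X^(p ^ s))^+u :> {poly int}.
  by rewrite rmorphXn rmorphB rmorph1 /= comp_polyX.
case: H => h [k E]; exists (h + k); rewrite mulrDr -E; ring.
Qed.

Lemma coefWR0 p u s L q a' e r : prime p -> (u <= p)%N -> (r < p)%N -> (0 < e < p)%N ->
  q = ((a' * p + e) * p + r)%N ->
  (W p (s + L.+2) * ((1 - 'X)^+u \Po 'X^(p ^ s)))`_(q * p ^ s) =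
  (W p L)`_a' * (((1 - 'X)^+(p.-1 + u))`_r * ((1 - 'X)^+p.-1)`_e
               + ((1 - 'X)^+(p.-1 + u))`_(p + r) * ((1 - 'X)^+p.-1)`_(e.-1)).
Proof.
move=> pp up rp /andP [e0 ep] Eq.
have p0 := prime_gt0 pp.
rewrite Wsplit -mulrA -comp_polyM -(addn0 (q * p ^ s)%N) L1 ?Wsize ?expn_gt0 ?p0 //.
rewrite Wcoef0 // mul1r Wsplit1 mulrAC -exprD addnC Eq.
rewrite L2 //; last 2 first.
- by apply: leq_trans (size1X _) _; lia.
- by rewrite addn_gt0 e0 orbT.
have -> : ((a' * p + e).-1 = a' * p + e.-1)%N by lia.
rewrite !Wpeel //; last by lia.
ring.
Qed.

Lemma coefWR1 p n (R1 : {poly int}) : prime p -> (size R1 <= n.+1)%N -> R1.[1] = 0 ->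
  (p%:Z %| (W p n.+1 * R1)`_n)%Z.
Proof.
move=> pp sR hR; have p1 := prime_gt1 pp.
rewrite mulrC coefM.
have -> : \sum_(j < n.+1) R1`_j * (W p n.+1)`_(n - j) =
   \sum_(j < n.+1) R1`_j + \sum_(j < n.+1) R1`_j * ((W p n.+1)`_(n - j) - 1).
  by rewrite -big_split; apply: eq_bigr => j _ /=; rewrite mulrBr mulr1 addrC subrK.
have -> : \sum_(j < n.+1) R1`_j = R1.[1].
  by rewrite (horner_coef_wide 1 sR); apply: eq_bigr => j _; rewrite expr1n mulr1.
rewrite hR add0r; apply: rpred_sum => j _; apply: dvdz_mull; apply: W_mod => //.
apply: leq_ltn_trans (leq_subr _ _) _.
exact: ltn_trans (ltnSn n) (ltn_expl _ p1).
Qed.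

Lemma coef_eqmp (c : int) f g i : eqm (c%:P) (c%:P) f g -> (c %| f`_i - g`_i)%Z.
Proof.
move=> [h [k E]]; rewrite -coefB E coefD !coefCM -mulrDr.
exact: dvdz_mulr.
Qed.

Lemma kap_cong p u (j : nat) : prime p -> odd p -> (0 < u)%N ->
  (p%:Z %| ((1 - 'X)^+(p.-1 + u))`_j
      - (((1 - 'X)^+u.-1)`_j - (if (j < p)%N then 0 else ((1 - 'X)^+u.-1)`_(j - p))))%Z.
Proof.
move=> pp op u0; have p0 := prime_gt0 pp.
have -> : (p.-1 + u = p + u.-1)%N by lia.
rewrite exprD.
have H := eqmM (frob1 'X pp op) (eqm_refl (p%:R)%:P (p%:R)%:P ((1 - 'X)^+u.-1 : {poly int})).
have := coef_eqmp j H.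
by rewrite mulrBl mul1r coefB coefXnM natz.
Qed.

Lemma bb_rel p e : (0 < e < p)%N ->
  e%:R * ((1 - 'X)^+p.-1 : {poly int})`_e
    = (e%:R - p%:R) * ((1 - 'X)^+p.-1 : {poly int})`_e.-1.
Proof.
case: e => [|e] // /andP [_ ep] /=.
rewrite !coef1X.
have h := mul_bin_left p.-1 e.
have h2 : (p.-1 - e = p - e.+1)%N by lia.
rewrite h2 in h.
have h3 : (e.+1%:R * ('C(p.-1, e.+1))%:R = (p%:R - e.+1%:R) * ('C(p.-1, e))%:R :> int).
  by rewrite -natrB ?(ltnW ep) // -!natrM h.
rewrite exprS.
have -> : (e.+1%:R * (-1 * (-1) ^+ e * ('C(p.-1, e.+1))%:R) : int)
   = - (-1) ^+ e * (e.+1%:R * ('C(p.-1, e.+1))%:R) by ring.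
rewrite h3; ring.
Qed.

Lemma dvd_sq_mul (p : nat) (a : int) : (p%:Z %| a)%Z -> (((p ^ 2)%N)%:R %| p%:Z * a)%Z.
Proof.
move=> H; have -> : (((p ^ 2)%N)%:R : int) = p%:Z * p%:Z by rewrite natrX expr2 natz.
by apply: dvdz_mul => //; apply: dvdzz.
Qed.

Lemma choose_e p u (r : nat) : prime p -> (0 < p)%N ->
  let kap j := ((1 - 'X)^+(p.-1 + u) : {poly int})`_j in
  let bb j := ((1 - 'X)^+p.-1 : {poly int})`_j in
  (p%:Z %| kap r + kap (p + r))%Z ->
  ~ (((p ^ 2)%N)%:R %| kap r + kap (p + r))%Z ->
  coprimez (kap r) p ->
  exists e, (0 < e < p)%N /\
    (((p ^ 2)%N)%:R %| kap r * bb e + kap (p + r) * bb e.-1)%Z.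
Proof.
move=> pp p0 kap bb hD hD2 hcop.
case/dvdzP: hD => d Hd.
have nd : ~~ (p%:Z %| d)%Z.
  apply/negP => /dvdzP [t Ht]; apply: hD2; rewrite Hd Ht.
  have -> : (((p ^ 2)%N)%:R : int) = p%:Z * p%:Z by rewrite natrX expr2 natz.
  by apply/dvdzP; exists t; ring.
have cd : coprimez d p.
  rewrite coprimezE coprime_sym prime_coprime //.
case/coprimezP: cd => [[x y]] /= Hxy.
set ei := ((x * kap r) %% p%:Z)%Z.
have pnz : p%:Z != 0 by apply/eqP => -[] H; rewrite H in p0.
have ei0 : 0 <= ei by apply: modz_ge0.
have eip : ei < p%:Z by apply: ltz_pmod; rewrite ltz_nat.
have hdiv : (p%:Z %| ei * d - kap r)%Z.
  have E := divz_eq (x * kap r) p%:Z.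
  rewrite /ei; set q := ((x * kap r) %/ p%:Z)%Z in E *.
  have -> : ((x * kap r) %% p%:Z)%Z = x * kap r - q * p%:Z by rewrite [in RHS]E; ring.
  apply/dvdzP; exists (- kap r * y - q * d).
  have -> : (x * kap r - q * p%:Z) * d - kap r = kap r * (x * d + y * p%:Z - 1) - kap r * y * p%:Z - q * p%:Z * d by ring.
  by rewrite Hxy; ring.
exists `|ei|%N.
have eiE : (`|ei|%N)%:Z = ei by rewrite gez0_abs.
have e0 : (0 < `|ei|)%N.
  rewrite lt0n; apply/negP => /eqP H0.
  have ei00 : ei = 0 by rewrite -eiE H0.
  rewrite ei00 mul0r sub0r in hdiv.
  move: hcop; rewrite /coprimez => /eqP hg.
  have : (p%:Z %| gcdz (kap r) p%:Z)%Z.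
    by rewrite dvdz_gcd dvdzz andbT -rpredN.
  rewrite hg dvdzE /= dvdn1 => /eqP p1.
  by move: (prime_gt1 pp); rewrite p1.
have ep : (`|ei| < p)%N by rewrite -ltz_nat eiE.
split; first by rewrite e0 ep.
have cpe : coprimez (((p ^ 2)%N)%:R) (`|ei|%N)%:Z.
  rewrite coprimezE natz !absz_nat coprime_pexpl // prime_coprime //.
  by rewrite gtnNdvd.
rewrite -(Gauss_dvdzr _ cpe).
have -> : (`|ei|%N)%:Z * (kap r * bb `|ei|%N + kap (p + r) * bb `|ei|.-1)
   = kap r * ((`|ei|%N)%:R * bb `|ei|%N) + (`|ei|%N)%:Z * kap (p + r) * bb `|ei|.-1.
  by rewrite -natz; ring.
rewrite /bb bb_rel; last by rewrite e0 ep.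
rewrite (natz `|ei|) eiE.
have -> : kap r * ((ei - p%:R) * ((1 - 'X) ^+ p.-1)`_`|ei|.-1) +
  ei * kap (p + r) * ((1 - 'X) ^+ p.-1)`_`|ei|.-1 =
  ((1 - 'X) ^+ p.-1)`_`|ei|.-1 * (ei * (kap r + kap (p + r)) - p%:Z * kap r).
  by rewrite natz; ring.
rewrite Hd.
have -> : ei * (d * p%:Z) - p%:Z * kap r = p%:Z * (ei * d - kap r) by ring.
by apply: dvdz_mull; apply: dvd_sq_mul.
Qed.

Lemma choose_re p u : prime p -> odd p -> (2 <= u)%N -> (u < p)%N ->
  exists r e, (r < 2)%N /\ (0 < e < p)%N /\
   (((p ^ 2)%N)%:R %| ((1 - 'X)^+(p.-1 + u) : {poly int})`_r * ((1 - 'X)^+p.-1 : {poly int})`_e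
          + ((1 - 'X)^+(p.-1 + u) : {poly int})`_(p + r) * ((1 - 'X)^+p.-1 : {poly int})`_e.-1)%Z.
Proof.
move=> pp op u2 up.
have p0 := prime_gt0 pp.
have hc := fun j => kap_cong j pp op (leq_trans (isT : (0 < 2)%N) u2).
set kap := fun j => ((1 - 'X)^+(p.-1 + u) : {poly int})`_j.
have hp : (-1) ^+ p = -1 :> int by rewrite -signr_odd op expr1.
have k0 : kap 0%N = 1 by rewrite /kap coef1X expr0 bin0 mul1r.
have k1 : kap 1%N = - (p.-1 + u)%:R by rewrite /kap coef1X expr1 bin1 mulN1r.
have kp : kap p = - ('C(p.-1 + u, p))%:R by rewrite /kap coef1X hp mulN1r.
have kp1 : kap (p + 1)%N = ('C(p.-1 + u, p.+1))%:R.
  by rewrite /kap coef1X addn1 exprS hp; ring.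
have V0 : ((1 - 'X)^+u.-1 : {poly int})`_0 = 1 by rewrite coef1X expr0 bin0 mul1r.
have V1 : ((1 - 'X)^+u.-1 : {poly int})`_1 = - u.-1%:R by rewrite coef1X expr1 bin1 mulN1r.
have Vp : forall j, (p <= j)%N -> ((1 - 'X)^+u.-1 : {poly int})`_j = 0.
  by move=> j pj; rewrite coef1X bin_small ?mulr0 //; lia.
have hD0 : (p%:Z %| kap 0%N + kap p)%Z.
  have := hc p; rewrite ltnn subnn V0 Vp // k0 /kap.
  by congr (_ %| _)%Z; ring.
have hD1 : (p%:Z %| kap 1%N + kap (p + 1)%N)%Z.
  have := hc (p + 1)%N; rewrite ltnNge leq_addr /= addKn V1 Vp ?leq_addr // => H.
  have -> : kap 1%N + kap (p + 1)%N = (kap (p + 1)%N - (0 - - u.-1%:R)) + p%:Z * (-1).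
    rewrite k1 natrD.
    have -> : (p.-1%:R : int) = p%:R - 1 by rewrite -[in RHS](prednK p0) -natr1 addrK.
    have -> : (u.-1%:R : int) = u%:R - 1.
      by rewrite -[in RHS](@prednK u) -?natr1 ?addrK //; apply: leq_trans u2.
    by rewrite natz; ring.
  by rewrite rpredD // dvdz_mulr.
have hP2 : (((p ^ 2)%N)%:R : int) = p%:Z * p%:Z by rewrite natrX expr2 natz.
have hnot : ~ ((((p ^ 2)%N)%:R %| kap 0%N + kap p)%Z /\ (((p ^ 2)%N)%:R %| kap 1%N + kap (p + 1)%N)%Z).
  move=> [H0 H1].
  have hb := mul_bin_left (p.-1 + u) p.
  have e1 : (p.-1 + u - p = u.-1)%N by lia.
  rewrite e1 in hb.
  have hb' : (p%:Z + 1) * ('C(p.-1 + u, p.+1))%:R = (u%:Z - 1) * ('C(p.-1 + u, p))%:R.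
    have : ((p.+1 * 'C(p.-1 + u, p.+1))%N%:R : int) = ((u.-1 * 'C(p.-1 + u, p))%N%:R) by rewrite hb.
    rewrite !natrM -natr1 natz.
    have -> : (u.-1%:R : int) = u%:R - 1.
      by rewrite -[in RHS](@prednK u) -?natr1 ?addrK //; apply: leq_trans u2.
    by rewrite (natz u).
  have E : (p%:Z + 1) * (kap 1%N + kap (p + 1)%N) + (u%:Z - 1) * (kap 0%N + kap p)
      = - (p%:Z * p%:Z + p%:Z * u%:Z).
    rewrite k0 k1 kp kp1 mulrDr hb' natrD.
    have -> : (p.-1%:R : int) = p%:R - 1 by rewrite -[in RHS](prednK p0) -natr1 addrK.
    by rewrite !natz; ring.
  have H2 : (((p ^ 2)%N)%:R %| p%:Z * u%:Z)%Z.
    have -> : p%:Z * u%:Z = - ((p%:Z + 1) * (kap 1%N + kap (p + 1)%N) + (u%:Z - 1) * (kap 0%N + kap p))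
       + (- (p%:Z * p%:Z)) by rewrite E; ring.
    apply: rpredD; first by rewrite rpredN; apply: rpredD; apply: dvdz_mull.
    by rewrite rpredN hP2 dvdzz.
  rewrite hP2 dvdz_mul2l in H2; last by apply/eqP => -[] H; rewrite H in p0.
  by move: H2; rewrite dvdzE /= gtnNdvd //; apply: leq_trans u2.
have cop1 : coprimez (kap 1%N) p.
  rewrite k1 coprimeNz coprimezE /= natz absz_nat coprime_sym prime_coprime //.
  have -> : (p.-1 + u = u.-1 + p)%N by lia.
  rewrite dvdn_addl // gtnNdvd //; lia.
have cop0 : coprimez (kap 0%N) p by rewrite k0 coprimezE /= coprime1n.
case: (boolP (((p ^ 2)%N)%:R %| kap 0%N + kap p)%Z) => H0.
  have H1 : ~ (((p ^ 2)%N)%:R %| kap 1%N + kap (p + 1)%N)%Z by move=> H1; apply: hnot.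
  have [e [he1 he2]] := choose_e pp p0 hD1 H1 cop1.
  by exists 1%N, e.
have H0' : ~ (((p ^ 2)%N)%:R %| kap 0%N + kap (p + 0)%N)%Z by rewrite addn0; apply/negP.
have hD0' : (p%:Z %| kap 0%N + kap (p + 0)%N)%Z by rewrite addn0.
have [e [he1 he2]] := choose_e pp p0 hD0' H0' cop0.
by exists 0%N, e.
Qed.

Lemma final_aux p u s N : prime p -> (3 <= p)%N -> (2 <= u)%N -> (u <= p.-1)%N -> (0 < s)%N ->
  exists n : nat, (N <= n)%N /\
    (((p ^ 2)%N)%:R %| A p ((p - 1) * (u * p ^ s - 1)) n)%Z.
Proof.
move=> pp p3 u2 up s0.
have p0 := prime_gt0 pp; have p1 := prime_gt1 pp.
have op : odd p by case: (even_prime pp) => // p2; rewrite p2 in p3.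
have up' : (u < p)%N by lia.
have [r [e [r2 [he hT]]]] := choose_re pp op u2 up'.
move: he => /andP [e0 ep].
set q := ((N * p + e) * p + r)%N.
set n := (q * p ^ s)%N.
have ps0 : (0 < p ^ s)%N by rewrite expn_gt0 p0.
have qN : (N <= q)%N by rewrite /q; nia.
have uq : (u <= q)%N by rewrite /q; nia.
have sn : (s < n)%N.
  apply: leq_trans (ltn_expl s p1) _; rewrite /n; nia.
exists n; split; first by rewrite /n; nia.
have hM := main_cong n pp op (leq_trans (isT : (0 < 2)%N) u2) s0.
have [R1 hR] := Rdecomp u s pp op.
rewrite hR mulrDr coefD mulrCA coefCM in hM.
have hn : n.+1 = (s + (n - s.+1).+2)%N by lia.
have h1 : (((p ^ 2)%N)%:R %| (W p n.+1 * ((1 - 'X) ^+ u \Po 'X^(p ^ s)))`_n)%Z.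
  have rp : (r < p)%N by lia.
  have hep : (0 < e < p)%N by rewrite e0 ep.
  have hc := @coefWR0 p u s (n - s.+1) q N e r pp (ltnW up') rp hep (erefl q).
  by rewrite hn /n hc; apply: dvdz_mull.
have hR1 : R1.[1] = 0.
  have := congr1 (fun f : {poly int} => f.[1]) hR.
  rewrite /= hornerD hornerCM horner_comp hornerXn !horner_exp !hornerE.
  rewrite expr1n subrr !expr0n muln_eq0 (gtn_eqF (leq_trans (isT : (0 < 2)%N) u2)).
  rewrite (gtn_eqF ps0) /= add0r => /esym /eqP.
  rewrite mulf_eq0 => /orP [|/eqP //].
  by rewrite natz => /eqP [] H; rewrite H in p0.
have sR1 : (size R1 <= n.+1)%N.
  have pnz : (p%:R : int) != 0 by rewrite natz; apply/eqP => -[] H; rewrite H in p0.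
  rewrite -(size_Cmul _ pnz).
  have -> : (p%:R)%:P * R1 = (1 - 'X) ^+ (u * p ^ s) - ((1 - 'X) ^+ u \Po 'X^(p ^ s)).
    by rewrite hR; ring.
  apply: leq_trans (size_polyD _ _) _; rewrite size_opp geq_max; apply/andP; split.
    apply: leq_trans (size1X _) _; rewrite ltnS /n; nia.
  apply: leq_trans (size_comp_poly_leq _ _) _; rewrite size_polyXn /= ltnS.
  have := size1X u; move: (size ((1 - 'X) ^+ u : {poly int})) => k hk.
  have hk' : (k.-1 <= u)%N by lia.
  apply: leq_trans (leq_mul hk' (leqnn _)) _; rewrite /n; nia.
have h2 := coefWR1 pp sR1 hR1.
have h3 : (((p ^ 2)%N)%:R %| p%:R * (W p n.+1 * R1)`_n)%Z by have := dvd_sq_mul h2; rewrite -natz.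
have := rpredD (rpredD hM h1) h3.
by congr (_ %| _)%Z; ring.
Qed.

Local Close Scope ring_scope.

(* nu_p(x) >= 2  <->  p^2 divides x (with nu_p(0) = +oo). *)
Theorem theorem3p1 (p u s : nat) :
  prime p -> (3 <= p)%N -> (2 <= u)%N -> (u <= p.-1)%N -> (0 < s)%N ->
  forall N : nat, exists n : nat, (N <= n)%N /\
    ((p ^ 2)%:Z %| A p ((p - 1) * (u * p ^ s - 1)) n)%Z.
Proof.
move=> pp p3 u2 up s0 N.
have [n [hn hd]] := final_aux N pp p3 u2 up s0.
by exists n; split => //; rewrite -natz.
Qed.
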